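(* Let $\Sigma$ be a finite totally ordered alphabet, let $n\ge 1$ be an integer, and for every $c\in\Sigma$ let $n_c\ge 0$ be an integer, with $\sum_{c\in\Sigma}n_c=n-1$. Let $\mathcal U$ be the set of tries with $n$ nodes over $\Sigma$ in which, for every $c\in\Sigma$, exactly $n_c$ edges are labeled by $c$. Then $$|\mathcal U|=\frac{1}{n}\prod_{c\in\Sigma}\binom{n}{n_c}.$$
   Context: A trie (cardinal tree) over a finite totally ordered alphabet $\Sigma$ is a rooted ordered tree whose edges are labeled by symbols of $\Sigma$ such that (i) the labels of the edges leaving any node are pairwise distinct and (ii) siblings are ordered by the labels of their incoming edges. Two tries are the same if they are equal as edge-labeled rooted trees. *)

(* Defs.v *)
From mathcomp Require Import all_boot all_order all_algebra.
Set Implicit Arguments. Unset Strict Implicit. Unset Printing Implicit Defensive.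
Import Order.TTheory.

(* A rooted ordered tree whose edges carry labels in A: a node is given by the
   ordered list of its outgoing edges, each being (label, subtree). *)
Inductive trie (A : Type) : Type :=
  Node : seq (A * trie A) -> trie A.

Section Tries.
Context {d : Order.disp_t} {Sigma : orderType d}.

Fixpoint is_trie (t : trie Sigma) : bool :=
  let: Node es := t in
  sorted (fun x y => (x < y)%O) (map fst es) &&
  (fix all_t (l : seq (Sigma * trie Sigma)) : bool :=
     if l is (_, u) :: l' then is_trie u && all_t l' else true) es.

Fixpoint nodes (t : trie Sigma) : nat :=
  let: Node es := t in
  ((fix sum_t (l : seq (Sigma * trie Sigma)) : nat :=
      if l is (_, u) :: l' then (nodes u + sum_t l')%N else 0%N) es).+1.

Fixpoint edges_lab (c : Sigma) (t : trie Sigma) : nat :=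
  let: Node es := t in
  ((fix sum_t (l : seq (Sigma * trie Sigma)) : nat :=
      if l is (a, u) :: l' then ((a == c) + edges_lab c u + sum_t l')%N
      else 0%N) es).

End Tries.

(* Main.v *)
Require Import Defs.
From mathcomp Require Import all_boot all_order all_algebra.
From Stdlib Require Import List.
Import GRing.Theory.
Local Open Scope ring_scope.
From mathcomp Require Import seq path fintype bigop finset tuple finfun binomial zify.
From Stdlib Require Import Lia.
Set Implicit Arguments. Unset Strict Implicit. Unset Printing Implicit Defensive.
Import Order.TTheory Num.Theory.
Fixpoint fz (k : int) (b : seq int) : bool :=
  if b is x :: b' then (0 < k) && fz (k + x) b' else k == 0.

Definition ps (s : seq int) (i : nat) : int := \sum_(v <- take i s) v.

Lemma ps0 s : ps s 0 = 0.
Proof. by rewrite /ps take0 big_nil. Qed.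

Lemma psS a s i : ps (a :: s) i.+1 = a + ps s i.
Proof. by rewrite /ps /= big_cons. Qed.

Lemma fz_catP k x y : fz k (x ++ y) <->
  (forall i, (i < size x)%N -> 0 < k + ps x i) /\ fz (k + ps x (size x)) y.
Proof.
elim: x k => [|a x IH] k /=.
  by rewrite ps0 addr0; split => [h|[]//]; split.
split.
  case/andP => hk /IH [h1 h2]; split; last by rewrite psS addrA.
  by case=> [|i] hi; rewrite ?ps0 ?addr0 // psS addrA; apply: h1.
case=> h1 h2; apply/andP; split.
  by have := h1 0%N erefl; rewrite ps0 addr0.
apply/IH; split; last by rewrite -addrA -psS.
by move=> i hi; rewrite -addrA -psS; apply: h1.
Qed.

Lemma fz_nilP k : fz k [::] <-> k = 0.
Proof. by split => [/eqP|->]. Qed.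

Lemma fz_allP k x : fz k x <->
  (forall i, (i < size x)%N -> 0 < k + ps x i) /\ k + ps x (size x) = 0.
Proof.
rewrite -{1}[x]cats0; split.
  move=> H; apply fz_catP in H; case: H => h1 h2; split => //; exact/eqP.
by case=> h1 h2; apply fz_catP; split => //; rewrite h2.
Qed.

Lemma ps_add s j i : ps s (j + i) = ps s j + ps (drop j s) i.
Proof. by rewrite /ps takeD big_cat. Qed.

Lemma ps_take s j i : (i <= j)%N -> ps (take j s) i = ps s i.
Proof. by move=> h; rewrite /ps take_takel. Qed.

Lemma ps_size s i : (size s <= i)%N -> ps s i = \sum_(v <- s) v.
Proof. by move=> h; rewrite /ps take_oversize. Qed.

Section Cyc.
Variable b : seq int.
Hypothesis hsum : \sum_(v <- b) v = -1.
Local Notation n := (size b).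
Local Notation P := (ps b).

Lemma validP j : (j < n)%N -> fz 1 (rot j b) <->
  (forall i, (j + i < n)%N -> P j <= P (j + i)) /\ (forall i, (i < j)%N -> P j < P i).
Proof.
move=> hj; rewrite /rot.
have e : P j + ps (drop j b) (n - j) = -1.
  by rewrite -ps_add (subnKC (ltnW hj)) ps_size.
have zd : size (drop j b) = (n - j)%N by rewrite size_drop.
have zt : size (take j b) = j by rewrite size_take hj.
split.
- move=> H; apply fz_catP in H; case: H => h1 H; apply fz_allP in H; case: H => h2 _; split.
    move=> i hi; have := h1 i; rewrite zd ps_add.
    have hi' : (i < n - j)%N by lia.
    move=> /(_ hi'); lia.
  move=> i hi; have := h2 i; rewrite zt (ps_take _ (ltnW hi)) zd.
  move=> /(_ hi); lia.
- case=> h1 h2; apply fz_catP; split.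
    move=> i; rewrite zd => hi; have := h1 i; rewrite ps_add.
    have hi' : (j + i < n)%N by lia.
    move=> /(_ hi'); lia.
  apply fz_allP; split.
    by move=> i; rewrite zt ?zd => hi; rewrite (ps_take _ (ltnW hi)); have := h2 i hi; lia.
  rewrite zt zd ps_take //.
  lia.
Qed.

Lemma exmin (f : nat -> int) m : (0 < m)%N ->
  exists k, (k < m)%N /\ forall t, (t < m)%N -> f k <= f t.
Proof.
elim: m => [|m IH] // _; case: m IH => [|m] IH.
  by exists 0%N; split => // t; rewrite ltnS leqn0 => /eqP ->.
have [k [hk hmin]] := IH erefl.
case: (leP (f k) (f m.+1)) => h.
  exists k; split; first by apply: (ltn_trans hk).
  move=> t; rewrite ltnS leq_eqVlt => /orP [/eqP ->|] //; exact: hmin.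
exists m.+1; split => // t; rewrite ltnS leq_eqVlt => /orP [/eqP ->|ht] //.
apply: le_trans (hmin t ht); exact: ltW.
Qed.

Lemma cycle_one : (0 < n)%N ->
  exists j0, (j0 < n)%N /\ forall j, (j < n)%N -> fz 1 (rot j b) = (j == j0).
Proof.
move=> n0.
pose Q m := (m < n)%N && all (fun t => P m <= P t) (iota 0 n).
have hex : exists m, Q m.
  have [k [hk hmin]] := exmin P n0; exists k; rewrite /Q hk /=.
  by apply/allP => t; rewrite mem_iota add0n => /hmin.
case: (ex_minnP hex) => j /andP [hj /allP hmin] hleast.
have vj : fz 1 (rot j b).
  apply/validP => //; split.
    by move=> i hi; apply: hmin; rewrite mem_iota.
  move=> i hi; rewrite ltNge; apply/negP => hle.
  have : Q i.
    rewrite /Q (ltn_trans hi hj) /=; apply/allP => t ht.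
    exact: le_trans hle (hmin t ht).
  by move/hleast; rewrite leqNgt hi.
exists j; split => // j' hj'.
apply/idP/eqP => [vj'|->] //.
have [Aj BJ] := proj1 (validP hj) vj.
have [Aj' Bj'] := proj1 (validP hj') vj'.
case: (ltngtP j' j) => // h.
  by have := BJ _ h; have := Aj' (j - j')%N; rewrite (subnKC (ltnW h)) => /(_ hj); lia.
by have := Bj' _ h; have := Aj (j' - j)%N; rewrite (subnKC (ltnW h)) => /(_ hj'); lia.
Qed.

End Cyc.

Section Tr.
Context {d : Order.disp_t} {Sigma : finOrderType d}.
Notation tr := (trie Sigma).

Fixpoint trie_ind' (P : tr -> Prop)
  (H : forall es, (forall u, List.In u (map snd es) -> P u) -> P (Node es))
  (t : tr) : P t :=
  match t with Node es => H es
    ((fix F (l : seq (Sigma * tr)) : forall u, List.In u (map snd l) -> P u :=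
       match l return forall u, List.In u (map snd l) -> P u with
       | [::] => fun u (hin : List.In u [::]) => match hin with end
       | e0 :: l' => fun u hin => match hin with
             | or_introl h => eq_ind e0.2 P (trie_ind' H e0.2) u h
             | or_intror h => F l' u h end
       end) es)
  end.

Fixpoint enc (t : tr) : seq {set Sigma} :=
  let: Node es := t in [set x in map fst es] :: flatten (map (fun e => enc e.2) es).

Definition encF (U : seq tr) := flatten (map enc U).

Lemma encE es : enc (Node es) = [set x in map fst es] :: encF (map snd es).
Proof. by rewrite /= /encF -map_comp. Qed.

Lemma nodesE es : nodes (Node es) = (sumn (map (@nodes _ Sigma) (map snd es))).+1.
Proof. by congr S; elim: es => [|[a u] es IH] //=; rewrite IH. Qed.

Lemma edgesE c es : edges_lab c (Node es) =
   (count_mem c (map fst es) + sumn (map (@edges_lab _ Sigma c) (map snd es)))%N.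
Proof. elim: es => [|[a u] es /= IH] //=; rewrite IH; lia. Qed.

Lemma is_trieE es : is_trie (Node es) =
  sorted <%O (map fst es) && all (@is_trie _ Sigma) (map snd es).
Proof. by congr andb; elim: es => [|[a u] es IH] //=; rewrite IH. Qed.


Lemma all_In T (p : pred T) s x : all p s -> List.In x s -> p x.
Proof. by elim: s => [|y s IH] //= /andP [py ps] [<-|/IH]; auto. Qed.


Definition wt (S : {set Sigma}) : int := (#|S|%:Z - 1).
Definition code (w : seq {set Sigma}) := map wt w.

Lemma card_lab (s : seq Sigma) : sorted <%O s -> #|[set x in s]| = size s.
Proof. by move=> /lt_sorted_uniq us; rewrite cardsE; apply/card_uniqP. Qed.

Lemma forest_walk (U : seq tr) w k :
  (forall u, List.In u U -> forall k w, fz k (code (enc u ++ w)) = (0 < k) && fz (k - 1) (code w)) ->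
  0 <= k -> fz (k + (size U)%:Z) (code (encF U ++ w)) = fz k (code w).
Proof.
elim: U k => [|u U IH] k H k0 /=; first by rewrite addr0.
rewrite /encF /= -catA -/(encF U) H; last by left.
have -> : 0 < k + (size U).+1%:Z.
  by apply: (le_lt_trans k0); rewrite ltrDl ltz_nat.
rewrite /= -addn1 PoszD addrA addrK; apply: IH => // u' hu'.
by apply: H; right.
Qed.

Lemma tree_walk t : is_trie t -> forall k w,
  fz k (code (enc t ++ w)) = (0 < k) && fz (k - 1) (code w).
Proof.
elim/trie_ind': t => es IH; rewrite is_trieE => /andP [hs ha] k w.
rewrite encE cat_cons /= /wt card_lab // size_map.
case: (ltrP 0 k) => hk //=.
have -> : k + ((size es)%:Z - 1) = (k - 1) + (size (map snd es))%:Z.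
  by rewrite size_map addrCA addrC.
apply: forest_walk.
  move=> u hu; apply: IH => //.
  exact: (all_In ha hu).
by rewrite subr_ge0.
Qed.


Lemma encF_cat U1 U2 : encF (U1 ++ U2) = encF U1 ++ encF U2.
Proof. by rewrite /encF map_cat flatten_cat. Qed.

Lemma encF_cons u U : encF (u :: U) = enc u ++ encF U.
Proof. by []. Qed.

Lemma tree_surj w : forall k : nat, fz k%:Z (code w) ->
  exists U : seq tr, all (@is_trie _ Sigma) U /\ size U = k /\ w = encF U.
Proof.
elim: w => [|S w IH] k /=.
  by move/eqP => [->]; exists [::].
move=> /andP [hk hf].
have hm : k%:Z + wt S = (k.-1 + #|S|)%N%:Z.
  rewrite /wt PoszD; move: hk; rewrite ltz_nat; case: k {hf} => // k _.
  rewrite /= -addn1 !PoszD; lia.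
rewrite hm in hf; have [U' [ha [hs ->]]] := IH _ hf.
set L := sort <=%O (enum S).
have sL : sorted <%O L by rewrite sort_lt_sorted enum_uniq.
have zL : size L = #|S| by rewrite size_sort cardE.
have hSU : (#|S| <= size U')%N by rewrite hs leq_addl.
have zT : size (take #|S| U') = #|S| by rewrite size_take_min; apply/minn_idPl.
have e1 : map fst (zip L (take #|S| U')) = L by apply: unzip1_zip; rewrite zL zT.
have e2 : map snd (zip L (take #|S| U')) = take #|S| U' by apply: unzip2_zip; rewrite zL zT.
exists (Node (zip L (take #|S| U')) :: drop #|S| U').
rewrite -(cat_take_drop #|S| U') all_cat in ha; case/andP: ha => ha1 ha2.
split; last split.
- apply/andP; split => //.
  by rewrite is_trieE e1 e2 sL.
- rewrite /= size_drop hs; move: hk; rewrite ltz_nat => hk; by rewrite addnK prednK.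
- rewrite encF_cons encE e1 e2.
  rewrite cat_cons -encF_cat cat_take_drop; congr cons.
  by apply/setP => x; rewrite inE mem_sort mem_enum.
Qed.


Definition injP (u : tr) := is_trie u -> forall t2 w1 w2, is_trie t2 ->
  enc u ++ w1 = enc t2 ++ w2 -> u = t2 /\ w1 = w2.

Lemma forest_inj (U1 : seq tr) : (forall u, List.In u U1 -> injP u) ->
  forall U2 w1 w2, all (@is_trie _ Sigma) U1 -> all (@is_trie _ Sigma) U2 ->
  size U1 = size U2 -> encF U1 ++ w1 = encF U2 ++ w2 -> U1 = U2 /\ w1 = w2.
Proof.
elim: U1 => [|u U1 IH] H [|u2 U2] w1 w2 //=.
move=> /andP [h1 a1] /andP [h2 a2] [hs]; rewrite !encF_cons -!catA => he.
have [<- he'] := H u (or_introl erefl) h1 _ _ _ h2 he.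
have [<- <-] := IH (fun v hv => H v (or_intror hv)) _ _ _ a1 a2 hs he'.
by [].
Qed.

Lemma tree_inj t1 : injP t1.
Proof.
elim/trie_ind': t1 => es1 IH; rewrite /injP is_trieE => /andP [s1 a1] [es2] w1 w2.
rewrite is_trieE => /andP [s2 a2].
rewrite !encE !cat_cons => -[hS hw].
have hL : map fst es1 = map fst es2.
  apply: lt_sorted_eq => // x.
  by move/setP: hS => /(_ x); rewrite !inE.
have hz : size (map snd es1) = size (map snd es2).
  by rewrite !size_map -(size_map fst es1) hL size_map.
have [hU ->] := forest_inj IH a1 a2 hz hw.
split => //; rewrite -[es1]zip_unzip -[es2]zip_unzip; congr (Node (zip _ _)); by [].
Qed.


Lemma sumn_In (f g : tr -> nat) (U : seq tr) :
  (forall u, List.In u U -> f u = g u) -> sumn (map f U) = sumn (map g U).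
Proof.
elim: U => [|u U IH] //= H; rewrite H; last by left.
by rewrite IH // => v hv; apply: H; right.
Qed.

Lemma nodes_enc t : nodes t = size (enc t).
Proof.
elim/trie_ind': t => es IH; rewrite nodesE encE [size _]/= /encF size_flatten /shape.
congr S; elim: es IH => [|[a u] es IHes] //= H.
by rewrite H; [congr addn; apply: IHes => v hv; apply: H; right | left].
Qed.

Definition cnt (c : Sigma) (w : seq {set Sigma}) := count (fun S : {set Sigma} => c \in S) w.

Lemma edges_enc c t : is_trie t -> edges_lab c t = cnt c (enc t).
Proof.
elim/trie_ind': t => es IH; rewrite is_trieE => /andP [s1 a1].
rewrite edgesE encE /cnt /= /encF count_flatten -map_comp inE.
rewrite count_uniq_mem ?lt_sorted_uniq //; congr addn.
elim: es IH a1 {s1} => [|[a u] es IHes] //= H /andP [hu ha].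
rewrite H //; last by left.
by congr addn; apply: IHes => // v hv; apply: H; right.
Qed.

Lemma sum_card_cnt (w : seq {set Sigma}) :
  (\sum_(S <- w) #|S| = \sum_c cnt c w)%N.
Proof.
elim: w => [|S w IH]; first by rewrite big_nil big1.
rewrite big_cons IH /cnt /=.
under [in RHS]eq_bigr => c _ do rewrite -/(cnt c w).
rewrite big_split /=; congr addn.
by rewrite -sum1_card big_mkcond /=; apply: eq_bigr => c _; case: (c \in S).
Qed.

Lemma sum_code (w : seq {set Sigma}) :
  \sum_(v <- code w) v = (\sum_(S <- w) #|S|)%N%:Z - (size w)%:Z.
Proof.
elim: w => [|S w IH]; first by rewrite !big_nil.
rewrite /code /= !big_cons -/(code w) IH /wt.
rewrite PoszD -addn1 PoszD; set X := Posz (\sum_(_ <- w) _); set Y := Posz #|S|; set Z := Posz (size w).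
lia.
Qed.

Section Count.
Variable n : nat.
Variable nc : Sigma -> nat.
Local Notation T := (n.-tuple {set Sigma}).

Definition Aset := [set w : T | [forall c, cnt c w == nc c]].
Definition Vset := [set w in Aset | fz 1 (code w)].

Lemma cnt_tuple (w : T) c : cnt c w = #|[set i : 'I_n | c \in tnth w i]|.
Proof.
rewrite /cnt -[in LHS](map_tnth_enum w) count_map.
rewrite -sum1_count cardsE -sum1_card big_enum_cond /=.
by apply: eq_bigl => i; rewrite /= unfold_in.
Qed.

Definition phi (w : T) : {ffun Sigma -> {set 'I_n}} := [ffun c => [set i | c \in tnth w i]].
Definition psi (f : {ffun Sigma -> {set 'I_n}}) : T := [tuple [set c | i \in f c] | i < n].

Lemma psiK : cancel phi psi.
Proof.
move=> w; apply: eq_from_tnth => i; rewrite tnth_mktuple.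
by apply/setP => c; rewrite !inE ffunE inE.
Qed.

Lemma phiK : cancel psi phi.
Proof.
move=> f; apply/ffunP => c; rewrite ffunE; apply/setP => i.
by rewrite !inE tnth_mktuple inE.
Qed.

Lemma card_A : #|Aset| = (\prod_c 'C(n, nc c))%N.
Proof.
rewrite -(card_imset _ (can_inj psiK)).
have -> : phi @: Aset = [set f : {ffun Sigma -> {set 'I_n}} | [forall c, #|f c| == nc c]].
  apply/setP => f; rewrite inE; apply/imsetP/forallP.
  - case=> w; rewrite inE => /forallP H -> c; rewrite ffunE -cnt_tuple; exact: H.
  - move=> H; exists (psi f); last by rewrite phiK.
    rewrite inE; apply/forallP => c; rewrite cnt_tuple.
    by have := congr1 (fun g : {ffun Sigma -> {set 'I_n}} => g c) (phiK f); rewrite /= ffunE => ->; exact: H.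
rewrite (eq_card (B := family (fun c => [set X : {set 'I_n} | #|X| == nc c]))).
  rewrite card_family foldrE big_map big_enum /=.
  by apply: eq_bigr => c _; rewrite card_draws card_ord.
move=> f; rewrite inE; apply/forallP/familyP => H c; have := H c; by rewrite inE.
Qed.

Lemma rot_tuple_inj j : injective (@rot_tuple n j {set Sigma}).
Proof. by move=> x y /(congr1 val) /= /rot_inj /val_inj. Qed.

Lemma card_AV : (0 < n)%N -> (\sum_c nc c)%N = n.-1 -> #|Aset| = (n * #|Vset|)%N.
Proof.
move=> n0 hs.
have hsum : forall w : T, w \in Aset -> \sum_(v <- code w) v = -1.
  move=> w; rewrite inE => /forallP H; rewrite sum_code sum_card_cnt size_tuple.
  rewrite (eq_bigr nc) ?hs; last by move=> c _; apply/eqP.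
  lia.
have rotA : forall j (w : T), (rot_tuple j w \in Aset) = (w \in Aset).
  move=> j w; rewrite !inE; apply: eq_forallb => c.
  by rewrite /cnt /= (permP (etrans (perm_rot j w (val w)) (perm_refl _))).
have one : forall w : T, w \in Aset -> (\sum_(j < n) (fz 1 (code (rot j w)) : nat) = 1)%N.
  move=> w hw.
  have zc : size (code w) = n by rewrite size_map size_tuple.
  have [j0 [hj0 H]] := cycle_one (hsum w hw) (ltac:(by rewrite zc)).
  rewrite zc in hj0.
  rewrite (bigD1 (Ordinal hj0)) //= /code map_rot H ?zc // eqxx big1 // => j hj.
  rewrite map_rot H ?zc //; case: eqP => // hjj.
  by move: hj; rewrite -(inj_eq val_inj) /= hjj eqxx.
rewrite -sum1_card (eq_bigr _ (fun w hw => esym (one w hw))) exchange_big /=.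
rewrite (eq_bigr (fun _ => #|Vset|)).
  by rewrite sum_nat_const card_ord.
move=> j _.
transitivity #|[set w in Aset | fz 1 (code (rot j w))]|.
  rewrite -sum1_card big_mkcond [RHS]big_mkcond; apply: eq_bigr => w _.
  by rewrite inE; case: (w \in Aset); case: fz.
rewrite -(card_preimset Vset (@rot_tuple_inj j)); apply: eq_card => w.
by have := rotA j w; rewrite !inE => ->.
Qed.

End Count.

Lemma list_lemma (l : seq (seq {set Sigma})) : uniq l ->
  (forall w, w \in l -> fz 1 (code w)) ->
  exists s : list tr, List.NoDup s /\ size s = size l /\
    forall t, List.In t s <-> (is_trie t /\ enc t \in l).
Proof.
elim: l => [|v l IH] /=.
  by move=> _ _; exists [::]; split; [constructor | split => // t; split => // [[]]].
move=> /andP [vl ul] H.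
have [s [hs [zs Hs]]] := IH ul (fun w hw => H w (@mem_behead _ (v :: l) _ hw)).
have [U [hU [zU eU]]] := tree_surj (H v (mem_head _ _)) (k := 1%N).
case: U hU zU eU => [|t [|]] // /andP [ht _] _; rewrite /encF /= cats0 => ev.
exists (t :: s); split; last split.
- constructor => // /Hs [_]; by rewrite -ev (negbTE vl).
- by rewrite /= zs.
- move=> t'; split.
    case=> [<-|/Hs [h1 h2]]; first by rewrite ev mem_head.
    by rewrite in_cons h2 orbT.
  case=> h1; rewrite in_cons => /orP [/eqP e|h2]; last by right; apply/Hs.
  left; have := @tree_inj t ht t' [::] [::] h1; rewrite !cats0 -ev e.
  by move=> /(_ erefl) [].
Qed.

Lemma enc_valid t : is_trie t -> fz 1 (code (enc t)).
Proof. by move=> h; have := tree_walk h 1 [::]; rewrite cats0 => ->. Qed.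

End Tr.

Theorem theorem1 (d : Order.disp_t) (Sigma : finOrderType d) (n : nat)
    (nc : Sigma -> nat) :
  (1 <= n)%N ->
  (\sum_(c : Sigma) nc c)%N = n.-1 ->
  exists s : list (trie Sigma),
    List.NoDup s /\
    (forall t : trie Sigma,
        List.In t s <->
        (is_trie t /\ nodes t = n /\ forall c : Sigma, edges_lab c t = nc c)) /\
    ((size s)%:R : rat) = (n%:R)^-1 * \prod_(c : Sigma) ('C(n, nc c))%:R.
Proof.
move=> n0 hs.
set l := map val (enum (Vset n nc)).
have ul : uniq l by rewrite map_inj_uniq ?enum_uniq //; apply: val_inj.
have hl : forall w, w \in l -> fz 1 (code w).
  by move=> w /mapP [x]; rewrite mem_enum inE => /andP [_ h] ->.
have [s [hs0 [zs Hs]]] := list_lemma ul hl.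
exists s; split => //; split.
  move=> t; rewrite Hs; split.
    case=> h1 /mapP [x]; rewrite mem_enum inE => /andP [hx _] ex; split => //.
    split; first by rewrite nodes_enc ex size_tuple.
    move=> c; rewrite edges_enc // ex; move: hx; rewrite inE => /forallP /(_ c) /eqP.
    by [].
  case=> h1 [h2 h3]; split => //.
  have hz : size (enc t) == n by rewrite -nodes_enc h2.
  apply/mapP; exists (Tuple hz) => //.
  rewrite mem_enum !inE enc_valid // andbT; apply/forallP => c.
  by rewrite /= -edges_enc // h3.
rewrite zs size_map -cardE -natr_prod -card_A card_AV // natrM mulKf //.
by rewrite pnatr_eq0 -lt0n.
Qed.
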